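(* Let $a\ge b\ge1$ be integers with $a>\frac{1+\sqrt5}{2}b$, let $\beta>1$ be the positive root of $\beta^2=a\beta+b$ and $\beta'=a-\beta$. Then \[ \sup_{j\in\mathbb Z}P_{\mathbf h(j-\beta)}(\beta')\;\le\;\frac{b-1}{1-(\beta')^2}\;<\;2\beta-a-1 . \]
   Context: For an algebraic integer $\beta$, the $\beta$-adic expansion of $x\in\mathbb Z[\beta]$ is the unique infinite word $\mathbf h(x)=u_0u_1u_2\cdots$ with $u_n\in\{0,1,\dots,|N(\beta)|-1\}$ such that $x-\sum_{i=0}^{n-1}u_i\beta^i\in\beta^n\mathbb Z[\beta]$ for all $n\in\mathbb N$; here $|N(\beta)|=b$. For an infinite word $\mathbf u=u_0u_1\cdots$ of integers, $P_{\mathbf u}(X)=\sum_{n\ge0}u_nX^n$. Note $j-\beta\in\mathbb Z[\beta]$ for $j\in\mathbb Z$. *)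

(* Defs.v *)
From Stdlib Require Import Reals ZArith.
Open Scope R_scope.

(* Z[beta] as a subset of R: { m + n*beta : m, n integers }.
   (For beta a root of X^2 - a X - b this is the ring Z[beta].) *)
Definition inZbeta (beta y : R) : Prop :=
  exists m n : Z, y = IZR m + IZR n * beta.

Fixpoint psum (u : nat -> Z) (x : R) (n : nat) : R :=
  match n with
  | O => 0
  | S k => psum u x k + IZR (u k) * x ^ k
  end.

(* u is the beta-adic expansion h(x) of x in Z[beta], with digit bound b = |N(beta)|:
   u_n in {0,...,b-1} and x - sum_{i<n} u_i beta^i in beta^n Z[beta] for all n. *)
Definition is_beta_expansion (beta : R) (b : Z) (x : R) (u : nat -> Z) : Prop :=
  (forall n, (0 <= u n <= b - 1)%Z) /\
  (forall n, exists y, inZbeta beta y /\ x - psum u beta n = beta ^ n * y).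

Definition P_value (u : nat -> Z) (x s : R) : Prop :=
  infinite_sum (fun n => IZR (u n) * x ^ n) s.

(* Main.v *)
Require Import Defs.
From Stdlib Require Import Reals ZArith Lra Psatz.
From Coquelicot Require Import Coquelicot.
Open Scope R_scope.

Lemma partial_bound (u : nat -> Z) (c x : R) :
  (forall n, (0 <= u n)%Z /\ IZR (u n) <= c) -> -1 < x -> x < 0 ->
  forall n, sum_f_R0 (fun k => IZR (u k) * x ^ k) (2*n) <= c * (1 - (x^2)^(S n)) / (1 - x^2)
         /\ sum_f_R0 (fun k => IZR (u k) * x ^ k) (S (2*n)) <= c * (1 - (x^2)^(S n)) / (1 - x^2).
Proof.
  intros Hu Hx1 Hx2.
  assert (Hq : 0 < 1 - x^2) by nra.
  assert (Hc : 0 <= c) by (destruct (Hu O) as [H1 H2]; apply IZR_le in H1; lra).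
  assert (Hodd : forall n, IZR (u (S (2*n))) * x ^ (S (2*n)) <= 0).
  { intro n. destruct (Hu (S (2*n))) as [H1 _]. apply IZR_le in H1.
    assert (Hp : x ^ S (2*n) = x * (x^2)^n) by (rewrite <- pow_mult; reflexivity).
    rewrite Hp.
    assert (0 <= (x^2)^n) by (apply pow_le; nra).
    assert (x * (x^2)^n <= 0) by nra. nra. }
  induction n as [|n [IHe IHo]].
  - simpl sum_f_R0. destruct (Hu O) as [_ H0]. split.
    + simpl. apply (Rmult_le_reg_r (1 - x*(x*1))). nra.
      field_simplify; [|nra]. nra.
    + pose proof (Hodd O). simpl in H |- *.
      apply (Rmult_le_reg_r (1 - x*(x*1))). nra.
      field_simplify; [|nra]. nra.
  - assert (E : (2 * S n = S (S (2*n)))%nat) by lia.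
    assert (Ev : sum_f_R0 (fun k => IZR (u k) * x ^ k) (2 * S n) <=
                 c * (1 - (x^2)^(S (S n))) / (1 - x^2)).
    { rewrite E. simpl sum_f_R0 at 1. fold (sum_f_R0 (fun k => IZR (u k) * x ^ k) (S (2*n))).
      change (sum_f_R0 (fun k : nat => IZR (u k) * x ^ k) (S (2 * n)) +
       IZR (u (S (S (2 * n)))) * x ^ S (S (2 * n)) <= c * (1 - (x ^ 2) ^ S (S n)) / (1 - x ^ 2)).
      destruct (Hu (S (S (2*n)))) as [_ H0].
      assert (Hp : x ^ S (S (2*n)) = (x^2)^(S n)).
      { rewrite <- pow_mult. f_equal. lia. }
      rewrite Hp.
      assert (0 <= (x^2)^(S n)) by (apply pow_le; nra).
      assert (Hid : c * (1 - (x ^ 2) ^ S (S n)) / (1 - x ^ 2) =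
                    c * (1 - (x ^ 2) ^ S n) / (1 - x ^ 2) + c * (x^2)^(S n)).
      { simpl ((x^2)^(S (S n))). simpl ((x^2)^(S n)). field. nra. }
      rewrite Hid. nra. }
    split; [exact Ev|].
    rewrite tech5. pose proof (Hodd (S n)). lra.
Qed.

Lemma all_bound (u : nat -> Z) (c x : R) :
  (forall n, (0 <= u n)%Z /\ IZR (u n) <= c) -> -1 < x -> x < 0 ->
  forall n, sum_f_R0 (fun k => IZR (u k) * x ^ k) n <= c / (1 - x^2).
Proof.
  intros Hu Hx1 Hx2 n.
  assert (Hq : 0 < 1 - x^2) by nra.
  assert (Hc : 0 <= c) by (destruct (Hu O) as [H1 H2]; apply IZR_le in H1; lra).
  assert (Hk : forall m, c * (1 - (x^2)^(S m)) / (1 - x^2) <= c / (1 - x^2)).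
  { intro m. assert (0 <= (x^2)^(S m)) by (apply pow_le; nra).
    unfold Rdiv. apply Rmult_le_compat_r. left; apply Rinv_0_lt_compat; lra. nra. }
  destruct (PeanoNat.Nat.Even_or_Odd n) as [[m Hm]|[m Hm]]; subst n.
  - eapply Rle_trans; [apply (partial_bound u c x Hu Hx1 Hx2 m)|apply Hk].
  - replace (2*m+1)%nat with (S (2*m)) by lia.
    eapply Rle_trans; [apply (partial_bound u c x Hu Hx1 Hx2 m)|apply Hk].
Qed.

Lemma lim_le (f : nat -> R) (l B : R) : Un_cv f l -> (forall n, f n <= B) -> l <= B.
Proof.
  intros Hc Hb. destruct (Rle_dec l B) as [H|H]; [exact H|].
  exfalso. destruct (Hc (l - B)) as [N HN]; [lra|].
  specialize (HN N (le_n N)). specialize (Hb N). unfold R_dist in HN.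
  apply Rabs_def2 in HN. lra.
Qed.

Theorem mainTheorem4 (a b : Z) (beta : R) :
  (1 <= b)%Z -> (b <= a)%Z ->
  IZR a > (1 + sqrt 5) / 2 * IZR b ->
  beta > 1 -> beta ^ 2 = IZR a * beta + IZR b ->
  (forall (j : Z) (u : nat -> Z),
     is_beta_expansion beta b (IZR j - beta) u ->
     exists s, P_value u (IZR a - beta) s /\
               s <= (IZR b - 1) / (1 - (IZR a - beta) ^ 2)) /\
  (IZR b - 1) / (1 - (IZR a - beta) ^ 2) < 2 * beta - IZR a - 1.
Proof.
  intros Hb Hab Hphi Hbe Heq.
  apply IZR_le in Hb. apply IZR_le in Hab.
  assert (Hba : beta > IZR a) by nra.
  set (x := IZR a - beta).
  assert (Hbx : beta * x = - IZR b) by (unfold x; nra).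
  assert (Hx2 : x < 0) by (unfold x; lra).
  assert (Hx1 : -1 < x) by nra.
  assert (Hq : 0 < 1 - x^2) by nra.
  split.
  - intros j u [Hd _].
    assert (Hu : forall n, (0 <= u n)%Z /\ IZR (u n) <= IZR b - 1).
    { intro n. destruct (Hd n) as [H1 H2]. split; [exact H1|].
      apply IZR_le in H2. rewrite minus_IZR in H2. exact H2. }
    assert (Hex : ex_series (fun n => IZR (u n) * x ^ n)).
    { apply (@ex_series_le R_AbsRing R_CompleteNormedModule _ (fun n => (IZR b - 1) * (Rabs x ^ n))).
      - intro n. change (norm (IZR (u n) * x ^ n)) with (Rabs (IZR (u n) * x ^ n)).
        destruct (Hu n) as [H1 H2]. apply IZR_le in H1.
        rewrite Rabs_mult, <- RPow_abs, (Rabs_right (IZR (u n))); [|lra].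
        apply Rmult_le_compat_r; [apply pow_le, Rabs_pos|lra].
      - apply (@ex_series_scal_l R_AbsRing R_NormedModule (IZR b - 1) (fun n => Rabs x ^ n)).
        apply ex_series_geom. rewrite Rabs_Rabsolu.
        rewrite Rabs_left; lra. }
    exists (Series (fun n => IZR (u n) * x ^ n)).
    pose proof (Series_correct _ Hex) as Hs. apply is_series_Reals in Hs.
    split; [exact Hs|].
    eapply lim_le; [exact Hs|]. apply all_bound; assumption.
  - assert (H5 : sqrt 5 * sqrt 5 = 5) by (apply sqrt_sqrt; lra).
    assert (H5p : 0 < sqrt 5) by (apply sqrt_lt_R0; lra).
    set (t := - x).
    assert (Ht0 : 0 < t) by (unfold t; lra).
    assert (Htb : t * beta = IZR b) by (unfold t; nra).
    assert (Hta : t * IZR a < IZR b) by nra.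
    assert (Htphi : t * (1 + sqrt 5) < 2) by nra.
    assert (Htt : t * t + t < 1) by nra.
    apply (Rmult_lt_reg_r (1 - x^2)); [exact Hq|].
    unfold Rdiv. rewrite Rmult_assoc, Rinv_l; [|lra]. rewrite Rmult_1_r.
    replace x with (-t) by (unfold t; ring).
    assert (Hbe2 : beta = IZR a + t) by (unfold t, x; ring).
    rewrite Hbe2 in Htb. rewrite Hbe2.
    nra.
Qed.
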